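(* Let $X$ be a normed space and let $Y$ be a real vector space ordered by a convex pointed cone $K$. Let $\alpha:\mathbb{R}_+\to\mathbb{R}_+$ be nondecreasing with $\lim_{t\to0^+}\alpha(t)/t=0$. Let $A\subset X$ be convex, $k_0\in K\setminus\{0\}$, and let $F:X\to Y$ be strongly $\alpha(\cdot)$-$k_0$ paraconvex on $A$ with constant $C\ge0$. Let $x_0\in A$, $h\in X$ with $\|h\|=1$, and $t_0\in\mathbb{R}$. For $t>t_0$ with $x_0+t_0h,\,x_0+th\in A$ define $$\phi(t):=\frac{F(x_0+th)-F(x_0+t_0h)}{t-t_0}+C\,\frac{\alpha(t-t_0)}{t-t_0}\,k_0.$$ Then for all $t_0<t_1<t$ with $x_0+t_0h,\,x_0+th\in A$ we have $$\phi(t)-\phi(t_1)+C\,\frac{\alpha(t_1-t_0)}{t_1-t_0}\,k_0\in K.$$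
   Context: A cone $K$ is pointed if $K\cap(-K)=\{0\}$. For a convex cone $K\subset Y$, write $x\le_K y$ iff $y-x\in K$. A mapping $F:X\to Y$ is strongly $\alpha(\cdot)$-$k_0$ paraconvex on a convex set $A\subset X$ with constant $C\ge0$ (where $k_0\in K$) if for all $x_1,x_2\in A$ and all $\lambda\in[0,1]$, $$F(\lambda x_1+(1-\lambda)x_2)\le_K \lambda F(x_1)+(1-\lambda)F(x_2)+C\min\{\lambda,1-\lambda\}\,\alpha(\|x_1-x_2\|)\,k_0.$$ *)

(* Defs.v *)
(* the scalar field is an arbitrary real field R
   (this contains the case of the reals; the statement is purely algebraic
   apart from the limit hypothesis, stated in epsilon-delta form). *)
From HB Require Import structures.
From mathcomp Require Import all_boot all_order all_algebra.
Set Implicit Arguments. Unset Strict Implicit. Unset Printing Implicit Defensive.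
Import Order.TTheory GRing.Theory Num.Theory.
Local Open Scope ring_scope.

Definition is_norm (R : realFieldType) (X : lmodType R) (N : X -> R) : Prop :=
  [/\ forall x, N x = 0 -> x = 0,
      forall (a : R) x, N (a *: x) = `|a| * N x
    & forall x y, N (x + y) <= N x + N y].

Definition convex_set (R : realFieldType) (V : lmodType R) (A : V -> Prop) : Prop :=
  forall x y (l : R), A x -> A y -> 0 <= l <= 1 -> A (l *: x + (1 - l) *: y).

Definition is_cone (R : realFieldType) (V : lmodType R) (K : V -> Prop) : Prop :=
  forall (l : R) k, 0 < l -> K k -> K (l *: k).

Definition pointed (R : realFieldType) (V : lmodType R) (K : V -> Prop) : Prop :=
  forall y, (K y /\ K (- y)) <-> y = 0.

Definition cone_le (R : realFieldType) (V : lmodType R) (K : V -> Prop) (x y : V) : Prop :=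
  K (y - x).

Definition strongly_paraconvex (R : realFieldType) (X Y : lmodType R)
  (N : X -> R) (K : Y -> Prop) (alpha : R -> R) (k0 : Y) (C : R)
  (A : X -> Prop) (F : X -> Y) : Prop :=
  forall x1 x2 (l : R), A x1 -> A x2 -> 0 <= l <= 1 ->
    cone_le K (F (l *: x1 + (1 - l) *: x2))
      (l *: F x1 + (1 - l) *: F x2
       + (C * Num.min l (1 - l) * alpha (N (x1 - x2))) *: k0).

Definition phi (R : realFieldType) (X Y : lmodType R)
  (alpha : R -> R) (k0 : Y) (C : R) (F : X -> Y) (x0 h : X) (t0 t : R) : Y :=
  (t - t0)^-1 *: (F (x0 + t *: h) - F (x0 + t0 *: h))
  + (C * (alpha (t - t0) / (t - t0))) *: k0.

(* Main.v *)
Require Import Defs.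
From HB Require Import structures.
From mathcomp Require Import all_boot all_order all_algebra.
From mathcomp Require Import ring lra.
Import Order.TTheory GRing.Theory Num.Theory.
Local Open Scope ring_scope.

Lemma ab_aux (V : zmodType) (a p f1 f0 mk : V) :
  a + p - (f1 - f0) = (f0 + a + mk - f1) + (p - mk).
Proof.
rewrite opprB [RHS]addrC !addrA; congr (_ + _).
rewrite [RHS]addrAC [p - mk + f0 + mk]addrAC subrK.
by rewrite [a + p]addrC addrAC.
Qed.

Lemma cvx_aux (R : realFieldType) (V : lmodType R) (l : R) (x y : V) :
  l *: x + (1 - l) *: y = y + l *: (x - y).
Proof. by rewrite scalerBl scale1r scalerBr addrCA. Qed.

Lemma Kadd (R : realFieldType) (V : lmodType R) (K : V -> Prop) a b :
  convex_set K -> is_cone K -> K a -> K b -> K (a + b).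
Proof.
move=> cK coK Ka Kb.
have h2 : (0 : R) < 2 by [].
have := cK _ _ (2^-1) (coK _ _ h2 Ka) (coK _ _ h2 Kb).
have e : 1 - 2^-1 = 2^-1 :> R.
  by field.
have e2 : 2^-1 * 2 = 1 :> R by field.
rewrite e !scalerA e2 !scale1r; apply.
apply/andP; split; first by rewrite invr_ge0.
by rewrite invf_le1 // ler1n.
Qed.

Theorem proposition3p1 (R : realFieldType) (X Y : lmodType R) (N : X -> R)
  (K : Y -> Prop) (alpha : R -> R) (A : X -> Prop) (k0 : Y) (C : R)
  (F : X -> Y) (x0 h : X) (t0 : R) :
  is_norm N ->
  convex_set K -> is_cone K -> pointed K ->
  (forall t, 0 <= t -> 0 <= alpha t) ->
  (forall s t, 0 <= s -> s <= t -> alpha s <= alpha t) ->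
  (forall e : R, 0 < e -> exists2 d : R, 0 < d &
      forall t, 0 < t -> t < d -> `|alpha t / t| < e) ->
  convex_set A ->
  K k0 -> k0 <> 0 ->
  0 <= C ->
  strongly_paraconvex N K alpha k0 C A F ->
  A x0 -> N h = 1 ->
  forall t1 t, t0 < t1 -> t1 < t ->
    A (x0 + t0 *: h) -> A (x0 + t *: h) ->
    K (phi alpha k0 C F x0 h t0 t - phi alpha k0 C F x0 h t0 t1
       + (C * (alpha (t1 - t0) / (t1 - t0))) *: k0).
Proof.
move=> [_ Nsc _] cK coK pK a0 amono _ cA Kk0 k0n0 C0 HF Ax0 Nh t1 t lt01 lt1 A0 At.
have hs : 0 < t1 - t0 by rewrite subr_gt0.
have hT : 0 < t - t0 by rewrite subr_gt0; apply: lt_trans lt1.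
have hsT : t1 - t0 < t - t0 by rewrite ltrBlDr subrK.
pose lam := (t1 - t0) / (t - t0).
have lam0 : 0 <= lam by rewrite divr_ge0 // ltW.
have lam1 : lam <= 1 by rewrite ler_pdivrMr // mul1r ltW.
have lamI : 0 <= lam <= 1 by rewrite lam0 lam1.
have Hp := HF _ _ lam At A0 lamI.
have pt : lam *: (x0 + t *: h) + (1 - lam) *: (x0 + t0 *: h) = x0 + t1 *: h.
  rewrite cvx_aux opprD addrACA subrr add0r -scalerBl scalerA.
  rewrite /lam divfK ?gt_eqF // -addrA -scalerDl.
  by rewrite [t0 + _]addrC subrK.
have nrm : N (x0 + t *: h - (x0 + t0 *: h)) = t - t0.
  by rewrite opprD addrACA subrr add0r -scalerBl Nsc Nh mulr1 gtr0_norm.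
rewrite pt nrm /cone_le in Hp.
rewrite /phi.
set Ft := F (x0 + t *: h) in Hp *.
set F0 := F (x0 + t0 *: h) in Hp *.
set F1 := F (x0 + t1 *: h) in Hp *.
set M := C * Num.min lam (1 - lam) * alpha (t - t0) in Hp.
set P := (C * (alpha (t - t0) / (t - t0))) *: k0.
set Q := (C * (alpha (t1 - t0) / (t1 - t0))) *: k0.
rewrite opprD addrA subrK [(t1 - t0)^-1 *: (F1 - F0)]scalerBr.
rewrite (@ab_aux _ _ _ _ _ ((t1 - t0)^-1 *: (M *: k0))).
apply: Kadd => //.
  have hsi : 0 < (t1 - t0)^-1 by rewrite invr_gt0.
  have := coK _ _ hsi Hp.
  rewrite cvx_aux scalerBr !scalerDr !scalerA.
  have -> : (t1 - t0)^-1 * lam = (t - t0)^-1 by rewrite /lam; field; rewrite ?gt_eqF.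
  by [].
rewrite scalerA /P -scalerBl.
have c0 : 0 <= C * (alpha (t - t0) / (t - t0)) - (t1 - t0)^-1 * M.
  rewrite subr_ge0 /M.
  have -> : (t1 - t0)^-1 * (C * Num.min lam (1 - lam) * alpha (t - t0)) =
     (C * alpha (t - t0)) * (Num.min lam (1 - lam) * (t1 - t0)^-1) by ring.
  rewrite mulrA; apply: ler_wpM2l; first by rewrite mulr_ge0 // a0 // ltW.
  have -> : (t - t0)^-1 = lam * (t1 - t0)^-1 by rewrite /lam; field; rewrite ?gt_eqF.
  apply: ler_wpM2r; first by rewrite invr_ge0 ltW.
  by rewrite ge_min lexx.
case: (ltrgt0P (C * (alpha (t - t0) / (t - t0)) - (t1 - t0)^-1 * M)) c0 => [cp _|cn|->].
- exact: coK.
- by [].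
- by rewrite scale0r; have [] := (pK 0).2 erefl.
Qed.
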